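(* Let $A$ be a finite dimensional algebra over an algebraically closed field $F$ of characteristic zero and let $P_1$, $P_2$ be presentations of $A$ by full algebras. Let $T_1\cong(T_1)_{ss}\oplus J_{T_1}$ be a full summand of $P_1$ and $T_2\cong(T_2)_{ss}\oplus J_{T_2}$ a full summand of $P_2$ with $(T_1)_{ss}\cong(T_2)_{ss}\cong U$. Let $T_1'=U\oplus J_{T_1}\oplus J_{T_2}$ be the fusion of $T_1$ and $T_2$, i.e. the subalgebra of $T_1\times T_2$ consisting of all pairs $(u+j_1,\varphi(u)+j_2)$ with $u\in(T_1)_{ss}$, $j_1\in J_{T_1}$, $j_2\in J_{T_2}$, where $\varphi:(T_1)_{ss}\to(T_2)_{ss}$ is a fixed isomorphism. Let $P_1'$ be the direct sum of full algebras obtained from $P_1$ by replacing the summand $T_1$ by $T_1'$. Then $P_1'$ is a presentation of $A$.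
   Context: For a finite dimensional algebra $T$ with Wedderburn–Malcev decomposition $T\cong T'_1\times\cdots\times T'_q\oplus J_T$, $T$ is full if, up to permuting simple components, $T'_1J_TT'_2\cdots J_TT'_q\neq0$. A presentation of $A$ by full algebras is a direct sum $T_1\oplus\cdots\oplus T_n$ of full algebras (with this decomposition fixed) which is PI-equivalent to $A$, i.e. has the same $T$-ideal of polynomial identities. *)

(* Defs.v *)
From HB Require Import structures.
From mathcomp Require Import all_boot all_order all_algebra.
Set Implicit Arguments.
Unset Strict Implicit.
Unset Printing Implicit Defensive.
Import GRing.Theory.
Local Open Scope ring_scope.

Section Defs.
Variable F : fieldType.

Record ncalg := NCAlg { carrier : vectType F; amul : carrier -> carrier -> carrier }.

Definition is_alg (A : ncalg) : Prop :=
  [/\ (forall (a : F) (x y z : carrier A),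
         amul (a *: x + y) z = a *: amul x z + amul y z),
      (forall (a : F) (x y z : carrier A),
         amul x (a *: y + z) = a *: amul x y + amul x z)
    & (forall x y z : carrier A, amul x (amul y z) = amul (amul x y) z)].

(* Noncommutative polynomials without constant term in variables x_0, x_1, ...:
   a finite list of (coefficient, nonempty word), a word (i, w) standing for
   x_i x_{w_1} ... x_{w_m}. *)
Definition ncpoly := seq (F * (nat * seq nat)).

Definition eval_word (A : ncalg) (s : nat -> carrier A) (w : nat * seq nat) :=
  foldl (fun acc k => amul acc (s k)) (s w.1) w.2.

Definition eval_poly (A : ncalg) (f : ncpoly) (s : nat -> carrier A) : carrier A :=
  \sum_(t <- f) t.1 *: eval_word s t.2.

Definition is_identity (A : ncalg) (f : ncpoly) : Prop :=
  forall s : nat -> carrier A, eval_poly f s = 0.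

Definition PIeq (A B : ncalg) : Prop :=
  forall f : ncpoly, is_identity A f <-> is_identity B f.

Definition alg0 : ncalg := @NCAlg 'rV[F]_0 (fun _ _ => 0).

Definition prod_alg (A B : ncalg) : ncalg :=
  @NCAlg (carrier A * carrier B)%type
    (fun x y => (amul x.1 y.1, amul x.2 y.2)).

Fixpoint dsum (Ts : seq ncalg) : ncalg :=
  if Ts is T :: Ts' then prod_alg T (dsum Ts') else alg0.

Definition spmul (A : ncalg) (U V : {vspace carrier A}) : {vspace carrier A} :=
  <<[seq amul u v | u <- vbasis U, v <- vbasis V]>>%VS.

Fixpoint sppow (A : ncalg) (I : {vspace carrier A}) (k : nat) : {vspace carrier A} :=
  if k is k'.+1 then (if k' is 0 then I else spmul (sppow I k') I) else fullv.

Definition nilpotent_sp (A : ncalg) (I : {vspace carrier A}) : Prop :=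
  exists k, (0 < k)%N /\ sppow I k = 0%VS.

Definition is_ideal (A : ncalg) (I : {vspace carrier A}) : Prop :=
  forall x y : carrier A, x \in I -> amul x y \in I /\ amul y x \in I.

Definition is_radical (A : ncalg) (J : {vspace carrier A}) : Prop :=
  [/\ is_ideal J, nilpotent_sp J &
      forall I, is_ideal I -> nilpotent_sp I -> (I <= J)%VS].

Definition is_subalg (A : ncalg) (S : {vspace carrier A}) : Prop :=
  forall x y : carrier A, x \in S -> y \in S -> amul x y \in S.

Definition wm_complement (A : ncalg) (J S : {vspace carrier A}) : Prop :=
  [/\ is_subalg S, (S + J)%VS = fullv & (S :&: J)%VS = 0%VS].

Definition ideal_in (A : ncalg) (S C : {vspace carrier A}) : Prop :=
  (C <= S)%VS /\
  forall x y : carrier A, x \in C -> y \in S -> amul x y \in C /\ amul y x \in C.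

Definition simple_component (A : ncalg) (S C : {vspace carrier A}) : Prop :=
  [/\ C != 0%VS, ideal_in S C &
      forall D, ideal_in S D -> D != 0%VS -> (D <= C)%VS -> D = C].

(* C_1 J C_2 J ... J C_q  (the empty product, q = 0, is taken to be 0) *)
Fixpoint fchain (A : ncalg) (J : {vspace carrier A}) (cs : seq {vspace carrier A})
  : {vspace carrier A} :=
  match cs with
  | [::] => 0%VS
  | C :: cs' => if cs' is [::] then C else spmul (spmul C J) (fchain J cs')
  end.

Definition full (A : ncalg) : Prop :=
  exists (J S : {vspace carrier A}) (cs : seq {vspace carrier A}),
    [/\ is_radical J, wm_complement J S, uniq cs,
        (forall C, simple_component S C <-> C \in cs) &
        fchain J cs != 0%VS].

Definition presentation (A : ncalg) (Ts : seq ncalg) : Prop :=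
  (forall j, (j < size Ts)%N -> is_alg (nth alg0 Ts j) /\ full (nth alg0 Ts j)) /\ PIeq A (dsum Ts).

Definition fusion_space (T1 T2 : ncalg) (J1 S1 : {vspace carrier T1})
  (J2 : {vspace carrier T2}) (phi : 'Hom(carrier T1, carrier T2))
  : {vspace (carrier T1 * carrier T2)%type} :=
  <<[seq (u, phi u) | u <- vbasis S1] ++ [seq (j, 0%R : carrier T2) | j <- vbasis J1]
      ++ [seq (0%R : carrier T1, j) | j <- vbasis J2]>>%VS.

Definition fusion (T1 T2 : ncalg) (J1 S1 : {vspace carrier T1})
  (J2 : {vspace carrier T2}) (phi : 'Hom(carrier T1, carrier T2)) : ncalg :=
  @NCAlg (subvs_of (fusion_space J1 S1 J2 phi))
    (fun x y => vsproj (fusion_space J1 S1 J2 phi)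
                  (@amul (prod_alg T1 T2) (vsval x) (vsval y))).

End Defs.

(* Main.v *)
Require Import Defs.
From HB Require Import structures.
From mathcomp Require Import all_boot all_order all_algebra.
Set Implicit Arguments.
Unset Strict Implicit.
Unset Printing Implicit Defensive.
Import GRing.Theory.
Local Open Scope ring_scope.

Section Gen.
Variable F : fieldType.

Lemma linfunE' (aT rT : vectType F) (f : aT -> rT) : linear f -> linfun f =1 f.
Proof.
move=> lf v.
pose ff : {linear aT -> rT} := HB.pack f (GRing.isLinear.Build _ _ _ _ f lf).
exact: (lfunE ff v).
Qed.

Lemma span_ind (V : vectType F) (X : seq V) (P : V -> Prop) :
  P 0 -> (forall a x y, P x -> P y -> P (a *: x + y)) ->
  (forall x, x \in X -> P x) -> forall v, v \in <<X>>%VS -> P v.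
Proof.
move=> P0 Pc PX v /(@coord_span _ _ _ (in_tuple X)) ->.
apply: (big_ind P) => //.
- by move=> x y Px Py; have := Pc 1 x y Px Py; rewrite scale1r.
- move=> i _; have := Pc (coord (in_tuple X) i v) _ _ (PX X`_i _) P0.
  by rewrite addr0; apply; apply: mem_nth.
Qed.

Section Alg.
Variables (A : ncalg F) (hA : is_alg A).

Lemma amul0l z : amul (0 : carrier A) z = 0.
Proof.
have [h _ _] := (hA : is_alg A).
have := h 1 0 0 z; rewrite !scale1r addr0 => e.
by move: (subrr (amul (0 : carrier A) z)); rewrite {1}e addrK.
Qed.
Lemma amul0r z : amul z (0 : carrier A) = 0.
Proof.
have [_ h _] := (hA : is_alg A); have := h 1 z 0 0; rewrite !scale1r addr0 => e.
by move: (subrr (amul z (0 : carrier A))); rewrite {1}e addrK.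
Qed.
Lemma amulDl x y z : amul (x + y) z = amul x z + amul y z :> carrier A.
Proof. by have [h _ _] := (hA : is_alg A); have := h 1 x y z; rewrite !scale1r. Qed.
Lemma amulDr x y z : amul z (x + y) = amul z x + amul z y :> carrier A.
Proof. by have [_ h _] := (hA : is_alg A); have := h 1 z x y; rewrite !scale1r. Qed.
Lemma amulZl a x z : amul (a *: x) z = a *: amul x z :> carrier A.
Proof. by have [h _ _] := (hA : is_alg A); have := h a x 0 z; rewrite !addr0 amul0l addr0. Qed.
Lemma amulZr a x z : amul z (a *: x) = a *: amul z x :> carrier A.
Proof. by have [_ h _] := (hA : is_alg A); have := h a z x 0; rewrite !addr0 amul0r addr0. Qed.
Lemma amulNl x z : amul (- x) z = - amul x z :> carrier A.
Proof. by rewrite -scaleN1r amulZl scaleN1r. Qed.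
Lemma amulNr x z : amul z (- x) = - amul z x :> carrier A.
Proof. by rewrite -scaleN1r amulZr scaleN1r. Qed.
Lemma amulBl x y z : amul (x - y) z = amul x z - amul y z :> carrier A.
Proof. by rewrite amulDl amulNl. Qed.
Lemma amulBr x y z : amul z (x - y) = amul z x - amul z y :> carrier A.
Proof. by rewrite amulDr amulNr. Qed.
Lemma amulA x y z : amul x (amul y z) = amul (amul x y) z :> carrier A.
Proof. by have [_ _ h] := (hA : is_alg A). Qed.

Lemma mem_spmul (U V : {vspace carrier A}) u v :
  u \in U -> v \in V -> amul u v \in spmul U V.
Proof.
move=> Uu Vv.
have hU : u \in <<vbasis U>>%VS by rewrite (span_basis (vbasisP U)).
have hV : v \in <<vbasis V>>%VS by rewrite (span_basis (vbasisP V)).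
elim/span_ind: hU => [|a x y Px Py|x Xx].
- by rewrite amul0l mem0v.
- by rewrite amulDl amulZl memvD // memvZ.
elim/span_ind: hV => [|a x' y Px Py|y Xy].
- by rewrite amul0r mem0v.
- by rewrite amulDr amulZr memvD // memvZ.
by apply: memv_span; apply/allpairsP; exists (x, y).
Qed.
End Alg.

Lemma spmul_sub (A : ncalg F) (U V W : {vspace carrier A}) :
  (forall u v, u \in U -> v \in V -> amul u v \in W) -> (spmul U V <= W)%VS.
Proof.
move=> h; apply/span_subvP => z /allpairsP [[x y] /= [Xx Yy ->]].
by apply: h; apply: vbasis_mem.
Qed.


Lemma spmulS (A : ncalg F) (hA : is_alg A) (U U' V V' : {vspace carrier A}) :
  (U <= U')%VS -> (V <= V')%VS -> (spmul U V <= spmul U' V')%VS.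
Proof.
move=> /subvP sU /subvP sV; apply: spmul_sub => u v Uu Vv.
by apply: mem_spmul => //; [apply: sU | apply: sV].
Qed.

Lemma spmul0l (A : ncalg F) (hA : is_alg A) (U : {vspace carrier A}) :
  spmul 0%VS U = 0%VS.
Proof.
apply/eqP; rewrite -subv0; apply: spmul_sub => u v; rewrite memv0 => /eqP -> _.
by rewrite amul0l // mem0v.
Qed.

Lemma sppowSS (A : ncalg F) (I : {vspace carrier A}) k :
  sppow I k.+2 = spmul (sppow I k.+1) I.
Proof. by []. Qed.

Lemma sppowS (A : ncalg F) (hA : is_alg A) (I I' : {vspace carrier A}) k :
  (I <= I')%VS -> (sppow I k <= sppow I' k)%VS.
Proof.
move=> sI; elim: k => [|k IH]; first exact: subvv.
case: k IH => [|k] IH //; rewrite !sppowSS; exact: spmulS.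
Qed.

Lemma sppow_zero (A : ncalg F) (hA : is_alg A) (I : {vspace carrier A}) n m :
  (0 < n)%N -> (n <= m)%N -> sppow I n = 0%VS -> sppow I m = 0%VS.
Proof.
move=> n0 /subnKC <- e; elim: (m - n)%N => [|d IH]; first by rewrite addn0.
case: n n0 e IH => // n _ e IH.
by rewrite addnS addSn sppowSS -addSn IH spmul0l.
Qed.

Section Hom.
Variables (A B : ncalg F) (hA : is_alg A) (hB : is_alg B).
Variable f : 'Hom(carrier A, carrier B).
Hypothesis fmul : forall x y, f (amul x y) = amul (f x) (f y).

Lemma limg_spmul U V : (f @: spmul U V)%VS = spmul (f @: U) (f @: V).
Proof.
apply/eqP; rewrite eqEsubv; apply/andP; split.
  rewrite /spmul limg_span; apply/span_subvP => z /mapP [w].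
  move=> /allpairsP [[x y] /= [Xx Yy ->]] ->; rewrite fmul.
  by apply: mem_spmul => //; apply: memv_img; apply: vbasis_mem.
apply: spmul_sub => u v /memv_imgP [a Ua ->] /memv_imgP [b Vb ->].
by rewrite -fmul; apply: memv_img; apply: mem_spmul.
Qed.

Lemma limg_sppow I k : (0 < k)%N -> (f @: sppow I k)%VS = sppow (f @: I) k.
Proof.
case: k => // k _; elim: k => [|k IH] //.
by rewrite !sppowSS limg_spmul IH.
Qed.

Lemma limg_fchain J cs :
  (f @: fchain J cs)%VS = fchain (f @: J) (map (lfun_img f) cs).
Proof.
elim: cs => [|C cs IH] /=; first exact: limg0.
by case: cs IH => [|D cs] IH //; rewrite limg_spmul limg_spmul IH.
Qed.

Hypothesis fsurj : limg f = fullv.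

Lemma surjP y : exists x, y = f x.
Proof.
have : y \in limg f by rewrite fsurj memvf.
by case/memv_imgP => x _ ->; exists x.
Qed.

Lemma ideal_img I : is_ideal I -> is_ideal (f @: I).
Proof.
move=> hI x y /memv_imgP [a Ia ->]; have [b ->] := surjP y.
by rewrite -!fmul; have [h1 h2] := hI a b Ia; split; apply: memv_img.
Qed.

Lemma nilp_img I : nilpotent_sp I -> nilpotent_sp (f @: I).
Proof.
case=> k [k0 e]; exists k; split => //.
by rewrite -limg_sppow // e limg0.
Qed.
End Hom.


Lemma img_inv (U V : vectType F) (h : 'Hom(U, V)) (k : 'Hom(V, U)) (D : {vspace U}) :
  {in D, forall x, k (h x) = x} -> (k @: (h @: D))%VS = D.
Proof.
move=> kh; apply/eqP; rewrite eqEsubv; apply/andP; split; apply/subvP.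
  by move=> z /memv_imgP [y /memv_imgP [x Dx ->] ->]; rewrite kh.
by move=> x Dx; rewrite -(kh x Dx); do 2!apply: memv_img.
Qed.

Section Transport.
Variables (U V : ncalg F) (h : 'Hom(carrier U, carrier V)) (k : 'Hom(carrier V, carrier U)).
Variables (SU : {vspace carrier U}) (SV : {vspace carrier V}).
Hypothesis hS : forall x, x \in SU -> h x \in SV.
Hypothesis hk : {in SV, forall y, h (k y) = y}.
Hypothesis hmul : {in SU &, forall x y, h (amul x y) = amul (h x) (h y)}.
Hypothesis kS : forall y, y \in SV -> k y \in SU.

Lemma ideal_tr C : ideal_in SU C -> ideal_in SV (h @: C).
Proof.
case=> /subvP sC hC; split.
  by apply/subvP => z /memv_imgP [x Cx ->]; apply: hS; apply: sC.
move=> x y /memv_imgP [a Ca ->] Vy.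
have Ua := sC a Ca; have Uy := kS Vy.
rewrite -(hk Vy) -!hmul //; have [h1 h2] := hC a (k y) Ca Uy.
by split; apply: memv_img.
Qed.
End Transport.

Lemma sc_tr (U V : ncalg F) (h : 'Hom(carrier U, carrier V)) (k : 'Hom(carrier V, carrier U))
  (SU : {vspace carrier U}) (SV : {vspace carrier V}) :
  (forall x, x \in SU -> h x \in SV) -> (forall y, y \in SV -> k y \in SU) ->
  {in SU, forall x, k (h x) = x} -> {in SV, forall y, h (k y) = y} ->
  {in SU &, forall x y, h (amul x y) = amul (h x) (h y)} ->
  {in SV &, forall x y, k (amul x y) = amul (k x) (k y)} ->
  forall C, simple_component SU C -> simple_component SV (h @: C).
Proof.
move=> hS kS kh hk hmul kmul C [nz iC minC].
have /subvP sC := iC.1.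
have khC : (k @: (h @: C))%VS = C by apply: img_inv => x /sC; apply: kh.
split.
- by apply: contra nz => /eqP e; rewrite -khC e limg0.
- exact: (ideal_tr hS hk hmul kS iC).
move=> D iD nzD sD.
have /subvP sDV := iD.1.
have hkD : (h @: (k @: D))%VS = D by apply: img_inv => y /sDV; apply: hk.
have iD0 : ideal_in SU (k @: D) := ideal_tr kS kh kmul hS iD.
have nzD0 : (k @: D)%VS != 0%VS.
  by apply: contra nzD => /eqP e; rewrite -hkD e limg0.
have sD0 : (k @: D <= C)%VS by rewrite -khC; apply: limgS.
by rewrite -hkD (minC _ iD0 nzD0 sD0).
Qed.


Lemma foldl_hom (A B : ncalg F) (f : carrier A -> carrier B)
  (fmul : forall x y, f (amul x y) = amul (f x) (f y)) (s : nat -> carrier A) ws acc :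
  f (foldl (fun acc k => amul acc (s k)) acc ws) =
  foldl (fun acc k => amul acc (f (s k))) (f acc) ws.
Proof. by elim: ws acc => //= k ws IH acc; rewrite IH fmul. Qed.

Lemma eval_poly_hom (A B : ncalg F) (f : 'Hom(carrier A, carrier B))
  (fmul : forall x y, f (amul x y) = amul (f x) (f y)) (P : ncpoly F) s :
  f (eval_poly P s) = eval_poly P (fun n => f (s n)).
Proof.
rewrite /eval_poly linear_sum; apply: eq_bigr => t _.
by rewrite linearZ; congr (_ *: _); apply: foldl_hom.
Qed.

Lemma eval_poly_ext (A : ncalg F) (P : ncpoly F) (s s' : nat -> carrier A) :
  (forall n, s n = s' n) -> eval_poly P s = eval_poly P s'.
Proof.
move=> e; rewrite /eval_poly; apply: eq_bigr => t _; congr (_ *: _).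
rewrite /eval_word e; elim: t.2.2 (s' t.2.1) => //= k ws IH acc.
by rewrite IH e.
Qed.

Lemma foldl_prod (A B : ncalg F) (s : nat -> carrier (prod_alg A B)) ws acc :
  foldl (fun acc k => @amul F (prod_alg A B) acc (s k)) acc ws =
  (foldl (fun acc k => amul acc (s k).1) acc.1 ws,
   foldl (fun acc k => amul acc (s k).2) acc.2 ws).
Proof. by elim: ws acc => [[]|k ws IH acc] //=; rewrite IH. Qed.

Lemma eval_poly_prod (A B : ncalg F) (P : ncpoly F) (s : nat -> carrier (prod_alg A B)) :
  eval_poly P s = (eval_poly P (fun n => (s n).1), eval_poly P (fun n => (s n).2)).
Proof.
rewrite /eval_poly; elim: P => [|t P IH]; first by rewrite !big_nil.
by rewrite !big_cons IH /eval_word foldl_prod.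
Qed.

Lemma identity_prod (A B : ncalg F) (P : ncpoly F) :
  is_identity (prod_alg A B) P <-> is_identity A P /\ is_identity B P.
Proof.
split.
  move=> H; split=> s.
    by have := H (fun n => (s n, 0)); rewrite eval_poly_prod => -[].
  by have := H (fun n => (0, s n)); rewrite eval_poly_prod => -[].
by case=> HA HB s; rewrite eval_poly_prod HA HB.
Qed.

Lemma identity_alg0 (P : ncpoly F) : is_identity (alg0 F) P.
Proof. by move=> s; apply: thinmx0. Qed.

Lemma identity_dsum (Ts : seq (ncalg F)) (P : ncpoly F) :
  is_identity (dsum Ts) P <->
  forall j, (j < size Ts)%N -> is_identity (nth (alg0 F) Ts j) P.
Proof.
elim: Ts => [|T Ts IH] /=.
  by split=> // _; apply: identity_alg0.
split.
  by move=> /identity_prod [hT /IH hR] [|j] //= /hR.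
move=> h; apply/identity_prod; split; first exact: (h 0%N).
by apply/IH => j hj; apply: (h j.+1).
Qed.

End Gen.

Lemma pairE (F : fieldType) (U V : vectType F) (a : F) (x1 y1 : U) (x2 y2 : V) :
  a *: ((x1, x2) : (U * V)%type) + (y1, y2) = (a *: x1 + y1, a *: x2 + y2).
Proof. by []. Qed.

Lemma pairD (F : fieldType) (U V : vectType F) (x1 y1 : U) (x2 y2 : V) :
  ((x1, x2) : (U * V)%type) + (y1, y2) = (x1 + y1, x2 + y2).
Proof. by []. Qed.

Lemma lfunD (F : fieldType) (U V : vectType F) (f : 'Hom(U, V)) x y : f (x + y) = f x + f y.
Proof. exact: linearD. Qed.
Lemma lfunB (F : fieldType) (U V : vectType F) (f : 'Hom(U, V)) x y : f (x - y) = f x - f y.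
Proof. exact: linearB. Qed.

Section Fusion.
Variable F : fieldType.
Variables (T1 T2 : ncalg F) (hT1 : is_alg T1) (hT2 : is_alg T2).
Variables (J1 S1 : {vspace carrier T1}) (J2 : {vspace carrier T2}).
Variable phi : 'Hom(carrier T1, carrier T2).
Hypothesis sub1 : is_subalg S1.
Hypothesis add1 : (S1 + J1)%VS = fullv.
Hypothesis cap1 : (S1 :&: J1)%VS = 0%VS.
Hypothesis idJ1 : is_ideal J1.
Hypothesis idJ2 : is_ideal J2.
Hypothesis phi_mul : {in S1 &, forall u v, phi (amul u v) = amul (phi u) (phi v)}.

Local Notation p := (daddv_pi S1 J1).

Lemma p_mem t : p t \in S1. Proof. exact: memv_pi. Qed.
Lemma p_id s : s \in S1 -> p s = s. Proof. exact: daddv_pi_id. Qed.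
Lemma p_sub t : t - p t \in J1.
Proof.
have e := daddv_pi_add cap1 (_ : t \in (S1 + J1)%VS).
rewrite -{1}e ?add1 ?memvf // addrAC subrr add0r; exact: memv_pi.
Qed.
Lemma p_uniq t a : a \in S1 -> t - a \in J1 -> p t = a.
Proof.
move=> Sa Ja; apply/eqP; rewrite -subr_eq0 -memv0 -cap1 memv_cap.
rewrite memvB ?p_mem //=.
have -> : p t - a = (t - a) - (t - p t) by rewrite [in RHS]opprB [in RHS]addrC [in RHS]addrA subrK.
by rewrite memvB // p_sub.
Qed.
Lemma p_J j : j \in J1 -> p j = 0.
Proof. by move=> Jj; apply: p_uniq; rewrite ?mem0v ?subr0. Qed.
Lemma p_mul s t : p (amul s t) = amul (p s) (p t).
Proof.
apply: p_uniq; first by apply: sub1; apply: p_mem.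
have -> : amul s t - amul (p s) (p t) = amul (s - p s) t + amul (p s) (t - p t).
  by rewrite amulBl // amulBr // addrA subrK.
by rewrite memvD //; [exact: (idJ1 t (p_sub s)).1 | exact: (idJ1 (p s) (p_sub t)).2].
Qed.

Local Notation W := (fusion_space J1 S1 J2 phi).

Lemma memW1 z : z \in W -> z.2 - phi (p z.1) \in J2.
Proof.
elim/span_ind => [|a x y Px Py|x].
- by rewrite /= !linear0 addr0 mem0v.
- rewrite /= [p (_ + _)]linearP [phi (_ + _)]linearP.
  have -> : a *: x.2 + y.2 - (a *: phi (p x.1) + phi (p y.1)) =
            a *: (x.2 - phi (p x.1)) + (y.2 - phi (p y.1)).
    by rewrite opprD addrACA scalerBr.
  by rewrite memvD // memvZ.
rewrite !mem_cat => /orP [/mapP [u Bu ->]|/orP [/mapP [j Bj ->]|/mapP [j Bj ->]]] /=.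
- by rewrite p_id ?subrr ?mem0v // vbasis_mem.
- by rewrite p_J; [rewrite !linear0 addr0 mem0v | exact: vbasis_mem].
- by rewrite !linear0 addr0; apply: vbasis_mem.
Qed.

Lemma inW_S u : u \in S1 -> (u, phi u) \in W.
Proof.
move=> Su; have : u \in <<vbasis S1>>%VS by rewrite (span_basis (vbasisP S1)).
move: u {Su}; apply: (span_ind (P := fun u => (u, phi u) \in W)) => [|a x y Px Py|x Bx].
- by rewrite linear0 mem0v.
- by rewrite linearP (_ : (_, _) = a *: (x, phi x) + (y, phi y)) // memvD // memvZ.
by apply: memv_span; rewrite !mem_cat map_f.
Qed.

Lemma inW_J1 u : u \in J1 -> (u, 0) \in W.
Proof.
move=> Su; have : u \in <<vbasis J1>>%VS by rewrite (span_basis (vbasisP J1)).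
move: u {Su}; apply: (span_ind (P := fun u => (u, 0) \in W)) => [|a x y Px Py|x Bx].
- exact: mem0v.
- have -> : (a *: x + y, 0) = a *: (x, 0) + (y, 0) :> (carrier T1 * carrier T2)%type.
    by rewrite pairE scaler0 addr0.
  by rewrite memvD // memvZ.
by apply: memv_span; rewrite !mem_cat map_f ?orbT.
Qed.

Lemma inW_J2 u : u \in J2 -> (0, u) \in W.
Proof.
move=> Su; have : u \in <<vbasis J2>>%VS by rewrite (span_basis (vbasisP J2)).
move: u {Su}; apply: (span_ind (P := fun u => (0, u) \in W)) => [|a x y Px Py|x Bx].
- exact: mem0v.
- have -> : (0, a *: x + y) = a *: (0, x) + (0, y) :> (carrier T1 * carrier T2)%type.
    by rewrite pairE scaler0 addr0.
  by rewrite memvD // memvZ.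
by apply: memv_span; rewrite !mem_cat map_f ?orbT.
Qed.

Lemma memW2 z : z.2 - phi (p z.1) \in J2 -> z \in W.
Proof.
case: z => z1 z2 /= h.
have -> : (z1, z2) = (p z1, phi (p z1)) + (z1 - p z1, 0) + (0, z2 - phi (p z1)).
  by rewrite !pairD !addr0; congr (_, _); rewrite addrC subrK.
by rewrite !memvD ?inW_S ?inW_J1 ?inW_J2 ?p_mem ?p_sub.
Qed.

Lemma mulW x y : x \in W -> y \in W -> (amul x.1 y.1, amul x.2 y.2) \in W.
Proof.
move=> /memW1 hx /memW1 hy; apply: memW2 => /=.
rewrite p_mul phi_mul ?p_mem //.
have -> : amul x.2 y.2 - amul (phi (p x.1)) (phi (p y.1)) =
  amul (x.2 - phi (p x.1)) y.2 + amul (phi (p x.1)) (y.2 - phi (p y.1)).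
  by rewrite amulBl // amulBr // addrA subrK.
by rewrite memvD //; [exact: (idJ2 y.2 hx).1 | exact: (idJ2 (phi (p x.1)) hy).2].
Qed.

Local Notation B := (fusion J1 S1 J2 phi).

Lemma valM (x y : carrier B) :
  vsval (amul x y) = (amul (vsval x).1 (vsval y).1, amul (vsval x).2 (vsval y).2).
Proof. by rewrite vsprojK //; apply: mulW; apply: subvsP. Qed.

Lemma vsvalP (a : F) (u v : subvs_of W) : vsval (a *: u + v) = a *: vsval u + vsval v.
Proof. exact: linearP. Qed.

Lemma is_alg_B : is_alg B.
Proof.
split.
- move=> a x y z; apply: subvs_inj.
  rewrite !valM !vsvalP !valM /=.
  by congr (_, _); rewrite amulDl // amulZl.
- move=> a x y z; apply: subvs_inj.
  rewrite !valM !vsvalP !valM /=.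
  by congr (_, _); rewrite amulDr // amulZr.
by move=> x y z; apply: subvs_inj; rewrite !valM /= !amulA.
Qed.


Lemma vsprojP (a : F) (u v : (carrier T1 * carrier T2)%type) :
  vsproj W (a *: u + v) = a *: vsproj W u + vsproj W v.
Proof. exact: linearP. Qed.

Definition f1 : 'Hom(carrier B, carrier T1) := linfun (fun x : subvs_of W => (vsval x).1).
Definition f2 : 'Hom(carrier B, carrier T2) := linfun (fun x : subvs_of W => (vsval x).2).
Definition g : 'Hom(carrier T1, carrier B) :=
  linfun (fun t : carrier T1 => vsproj W (t, phi (p t))).

Lemma f1E x : f1 x = (vsval x).1.
Proof. by rewrite /f1 linfunE' // => a u v /=; rewrite vsvalP. Qed.
Lemma f2E x : f2 x = (vsval x).2.
Proof. by rewrite /f2 linfunE' // => a u v /=; rewrite vsvalP. Qed.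
Lemma gE t : vsval (g t) = (t, phi (p t)).
Proof.
rewrite /g linfunE'; last first.
  move=> a u v /=; rewrite -vsprojP; congr (vsproj W _).
  by rewrite pairE !linearP.
by rewrite vsprojK //; apply: memW2; rewrite /= subrr mem0v.
Qed.

Lemma f1g t : f1 (g t) = t. Proof. by rewrite f1E gE. Qed.
Lemma f2g t : f2 (g t) = phi (p t). Proof. by rewrite f2E gE. Qed.

Lemma inj12 x y : f1 x = f1 y -> f2 x = f2 y -> x = y.
Proof.
rewrite !f1E !f2E => e1 e2; apply: subvs_inj; move: e1 e2.
by case: (vsval x) => ? ?; case: (vsval y) => ? ? /= -> ->.
Qed.

Lemma f1M x y : f1 (amul x y) = amul (f1 x) (f1 y).
Proof. by rewrite !f1E valM. Qed.
Lemma f2M x y : f2 (amul x y) = amul (f2 x) (f2 y).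
Proof. by rewrite !f2E valM. Qed.

Lemma gM s t : g (amul s t) = amul (g s) (g t).
Proof.
apply: inj12; first by rewrite f1M !f1g.
by rewrite f2M !f2g p_mul phi_mul ?p_mem.
Qed.

Lemma limg_full (U V : vectType F) (f : 'Hom(U, V)) :
  (forall y, exists x, f x = y) -> limg f = fullv.
Proof.
move=> h; apply/eqP; rewrite eqEsubv subvf /=; apply/subvP => y _.
by have [x <-] := h y; apply: memv_img; apply: memvf.
Qed.

Lemma f1_surj : limg f1 = fullv.
Proof. by apply: limg_full => t; exists (g t); apply: f1g. Qed.

Lemma ej1 j : j \in J1 -> vsval (vsproj W (j, 0)) = (j, 0).
Proof. by move=> Jj; rewrite vsprojK // inW_J1. Qed.
Lemma ej2 j : j \in J2 -> vsval (vsproj W (0, j)) = (0, j).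
Proof. by move=> Jj; rewrite vsprojK // inW_J2. Qed.

Lemma f2_surj (S2 : {vspace carrier T2}) :
  (S2 + J2)%VS = fullv -> (phi @: S1)%VS = S2 -> limg f2 = fullv.
Proof.
move=> add2 onto; apply: limg_full => y.
have : y \in (S2 + J2)%VS by rewrite add2 memvf.
case/memv_addP => s Ss [j Jj ->]; move: Ss; rewrite -onto => /memv_imgP [u Su ->].
exists (g u + vsproj W (0, j)).
by rewrite lfunD f2g f2E ej2 //= p_id.
Qed.

Definition Jf := (f1 @^-1: J1 :&: f2 @^-1: J2)%VS.
Lemma memJf x : (x \in Jf) = (f1 x \in J1) && (f2 x \in J2).
Proof. by rewrite memv_cap -!memv_preim. Qed.



Lemma f12_0 x : f1 x = 0 -> f2 x = 0 -> x = 0.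
Proof. by move=> h1 h2; apply: inj12; rewrite linear0. Qed.

Lemma rad_Jf : is_radical J1 -> is_radical J2 -> limg f2 = fullv -> is_radical Jf.
Proof.
case=> _ nil1 max1 [_ nil2 max2] s2; split.
- move=> x y; rewrite !memJf => /andP [h1 h2]; rewrite !f1M !f2M.
  have [a1 b1] := idJ1 (f1 y) h1; have [a2 b2] := idJ2 (f2 y) h2.
  by rewrite a1 a2 b1 b2.
- case: nil1 => n1 [n1p e1]; case: nil2 => n2 [n2p e2].
  have np : (0 < n1 + n2)%N by rewrite addn_gt0 n1p.
  exists (n1 + n2)%N; split => //.
  have z1 : sppow J1 (n1 + n2) = 0%VS by apply: (sppow_zero hT1 n1p (leq_addr _ _) e1).
  have z2 : sppow J2 (n1 + n2) = 0%VS by apply: (sppow_zero hT2 n2p (leq_addl _ _) e2).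
  have s1 : (f1 @: Jf <= J1)%VS.
    by apply/subvP => z /memv_imgP [w]; rewrite memJf => /andP [h _] ->.
  have s2' : (f2 @: Jf <= J2)%VS.
    by apply/subvP => z /memv_imgP [w]; rewrite memJf => /andP [_ h] ->.
  apply/eqP; rewrite -subv0; apply/subvP => x hx; rewrite memv0; apply/eqP.
  apply: f12_0; apply/eqP; rewrite -memv0.
    rewrite -z1; apply: (subvP (sppowS hT1 _ s1)).
    by rewrite -(limg_sppow is_alg_B hT1 f1M) // memv_img.
  rewrite -z2; apply: (subvP (sppowS hT2 _ s2')).
  by rewrite -(limg_sppow is_alg_B hT2 f2M) // memv_img.
move=> I iI nI.
have h1 := max1 _ (ideal_img f1M f1_surj iI) (nilp_img is_alg_B hT1 f1M nI).
have h2 := max2 _ (ideal_img f2M s2 iI) (nilp_img is_alg_B hT2 f2M nI).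
apply/subvP => x Ix.
by rewrite memJf (subvP h1 _ (memv_img f1 Ix)) (subvP h2 _ (memv_img f2 Ix)).
Qed.

Lemma limg_f1_Jf : (f1 @: Jf)%VS = J1.
Proof.
apply/eqP; rewrite eqEsubv; apply/andP; split.
  by apply/subvP => z /memv_imgP [w]; rewrite memJf => /andP [h _] ->.
apply/subvP => j Jj.
have -> : j = f1 (vsproj W (j, 0)) by rewrite f1E ej1.
by apply: memv_img; rewrite memJf f1E f2E ej1 //= Jj mem0v.
Qed.

Lemma full_B : is_radical J1 -> is_radical J2 -> limg f2 = fullv -> full T1 -> full B.
Proof.
move=> r1 r2 s2 [J [S [cs [rJ [subS addS capS] ucs hcs nzf]]]].
have eJ : J = J1.
  apply/eqP; rewrite eqEsubv; apply/andP; split.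
    by case: r1 => _ _ m; apply: m; case: rJ.
  by case: rJ => _ _ m; apply: m; case: r1.
subst J.
have rf := rad_Jf r1 r2 s2.
have kh : forall x, x \in (g @: S)%VS -> g (f1 x) = x.
  by move=> x /memv_imgP [s _ ->]; rewrite f1g.
have hS : forall x, x \in (g @: S)%VS -> f1 x \in S.
  by move=> x /memv_imgP [s Ss ->]; rewrite f1g.
have kS : forall y, y \in S -> g y \in (g @: S)%VS by move=> y; apply: memv_img.
exists Jf, (g @: S)%VS, (map (lfun_img g) cs); split => //.
- split.
  + move=> x y /memv_imgP [s Ss ->] /memv_imgP [t St ->].
    by rewrite -gM; apply: memv_img; apply: subS.
  + apply/eqP; rewrite eqEsubv subvf /=; apply/subvP => x _.
    have : f1 x \in (S + J1)%VS by rewrite addS memvf.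
    case/memv_addP => s Ss [j Jj ej].
    have -> : x = g s + (x - g s) by rewrite addrC subrK.
    apply: memv_add; first exact: memv_img.
    rewrite memJf !lfunB f1g ej [s + j]addrC addrK Jj /=.
    have := memW1 (subvsP x); rewrite -f1E -f2E ej lfunD (p_J Jj) addr0.
    by rewrite f2g.
  + apply/eqP; rewrite -subv0; apply/subvP => x; rewrite memv_cap.
    case/andP => /memv_imgP [s Ss ->]; rewrite memJf f1g => /andP [Js _].
    have : s \in (S :&: J1)%VS by rewrite memv_cap Ss.
    by rewrite capS memv0 => /eqP ->; rewrite linear0 mem0v.
- rewrite map_inj_in_uniq // => C D _ _ e.
  rewrite -(img_inv (h := g) (k := f1) (D := C)); last by move=> x _; apply: f1g.
  by rewrite e img_inv // => x _; apply: f1g.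
- move=> C; split.
  + move=> sC.
    have sC' := sc_tr hS kS kh (fun y _ => f1g y) (fun x y _ _ => f1M x y)
                  (fun x y _ _ => gM x y) sC.
    have /subvP sub : (C <= g @: S)%VS by case: sC => _ [].
    apply/mapP; exists (f1 @: C)%VS; first by apply/hcs.
    by rewrite img_inv // => x /sub; apply: kh.
  + case/mapP => D Dcs ->.
    apply: (sc_tr kS hS (fun y _ => f1g y) kh (fun x y _ _ => gM x y)
                  (fun x y _ _ => f1M x y)).
    by apply/hcs.
- apply: contraNneq nzf => e.
  have := limg_fchain is_alg_B hT1 f1M Jf (map (lfun_img g) cs).
  rewrite e limg0 limg_f1_Jf -map_comp.
  have -> : map (lfun_img f1 \o lfun_img g) cs = cs.
    rewrite -[RHS]map_id; apply: eq_map => C /=.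
    by rewrite img_inv // => x _; apply: f1g.
  by move=> ->.
Qed.

Lemma idB (P : ncpoly F) : is_identity T1 P -> is_identity T2 P -> is_identity B P.
Proof.
move=> h1 h2 s; apply: f12_0.
  by rewrite (eval_poly_hom f1M) h1.
by rewrite (eval_poly_hom f2M) h2.
Qed.

Lemma idB1 (P : ncpoly F) : is_identity B P -> is_identity T1 P.
Proof.
move=> h s; rewrite (eval_poly_ext P (s' := fun n => f1 (g (s n)))); last by move=> n; rewrite f1g.
by rewrite -(eval_poly_hom f1M) h linear0.
Qed.

End Fusion.

Theorem lemma2p9 (F : closedFieldType) (charF0 : [pchar F] =i pred0)
  (A : ncalg F) (hA : is_alg A)
  (P1 P2 : seq (ncalg F))
  (hP1 : presentation A P1) (hP2 : presentation A P2)
  (i k : nat) (hi : (i < size P1)%N) (hk : (k < size P2)%N)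
  (T1 T2 : ncalg F)
  (hT1 : nth (alg0 F) P1 i = T1) (hT2 : nth (alg0 F) P2 k = T2)
  (J1 S1 : {vspace carrier T1}) (J2 S2 : {vspace carrier T2})
  (hJ1 : is_radical J1) (hS1 : wm_complement J1 S1)
  (hJ2 : is_radical J2) (hS2 : wm_complement J2 S2)
  (phi : 'Hom(carrier T1, carrier T2))
  (phi_onto : (phi @: S1)%VS = S2)
  (phi_inj : (lker phi :&: S1)%VS = 0%VS)
  (phi_mul : {in S1 &, forall u v, phi (amul u v) = amul (phi u) (phi v)}) :
  presentation A (set_nth (alg0 F) P1 i (fusion J1 S1 J2 phi)).
Proof.
have [hP1a hP1pi] := hP1; have [hP2a hP2pi] := hP2.
have [hT1a fT1] : is_alg T1 /\ full T1 by rewrite -hT1; apply: hP1a.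
have [hT2a _] : is_alg T2 /\ full T2 by rewrite -hT2; apply: hP2a.
have [sub1 add1 cap1] := hS1; have [_ add2 _] := hS2.
have [idJ1 _ _] := hJ1; have [idJ2 _ _] := hJ2.
have s2 := f2_surj (phi := phi) add1 cap1 add2 phi_onto.
have szE : size (set_nth (alg0 F) P1 i (fusion J1 S1 J2 phi)) = size P1.
  by rewrite size_set_nth; apply/maxn_idPr.
split.
  move=> j; rewrite szE nth_set_nth /= => hj; case: eqP => _; last exact: hP1a.
  split; first exact: (is_alg_B hT1a hT2a sub1 add1 cap1 idJ1 idJ2 phi_mul).
  exact: (full_B hT1a hT2a sub1 add1 cap1 idJ1 idJ2 phi_mul hJ1 hJ2 s2 fT1).
move=> P; split.
  move=> hAP.
  have h1 := (identity_dsum P1 P).1 ((hP1pi P).1 hAP).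
  have h2 := (identity_dsum P2 P).1 ((hP2pi P).1 hAP).
  apply/identity_dsum => j; rewrite szE nth_set_nth /= => hj.
  case: eqP => _; last exact: h1.
  apply: (idB hT1a hT2a sub1 add1 cap1 idJ1 idJ2 phi_mul).
    by rewrite -hT1; apply: h1.
  by rewrite -hT2; apply: h2.
move=> h; apply/(hP1pi P).2; apply/identity_dsum => j hj.
have hj' : (j < size (set_nth (alg0 F) P1 i (fusion J1 S1 J2 phi)))%N by rewrite szE.
have := (identity_dsum _ P).1 h j hj'; rewrite nth_set_nth /=.
case: eqP => [-> | _] // H.
rewrite hT1; exact: (idB1 hT1a hT2a sub1 add1 cap1 idJ1 idJ2 phi_mul H).
Qed.
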